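(* For each calculus $\mathsf{S}\in\{\mathsf{S.ConstCKID},\mathsf{S.ConstCKMP},\mathsf{S.ConstCKMPID}\}$: the rules $\mathsf{w_L}$ (from $\Gamma\Rightarrow\Delta$ infer $\Gamma,\varphi\Rightarrow\Delta$), $\mathsf{w_R}$ (from $\Gamma\Rightarrow$ infer $\Gamma\Rightarrow\varphi$) and $\mathsf{c}$ (from $\Gamma,\varphi,\varphi\Rightarrow\Delta$ infer $\Gamma,\varphi\Rightarrow\Delta$) are height-preserving admissible in $\mathsf{S}$, and the rule $\mathsf{cut}$ (from $\Gamma\Rightarrow\varphi$ and $\Gamma',\varphi\Rightarrow\Delta$ infer $\Gamma,\Gamma'\Rightarrow\Delta$) is admissible in $\mathsf{S}$.
   Context: Language $\mathcal{L}$: formulas $\varphi ::= p \mid \bot \mid \varphi\wedge\varphi \mid \varphi\vee\varphi \mid \varphi\to\varphi \mid \varphi \mathrel{\Box\!\!\to} \varphi \mid \varphi \mathrel{\Diamond\!\!\to}\varphi$. A sequent $\Gamma\Rightarrow\Delta$ is a pair of finite multisets with $|\Delta|\le1$; $\varphi\Leftrightarrow\rho$ abbreviates $\varphi\Rightarrow\rho$ and $\rho\Rightarrow\varphi$. Throughout $0\le|\Delta|\le1$, $n\ge0$. Propositional rules (premisses / conclusion): init: $\Gamma,p\Rightarrow p$; $\bot_L$: $\Gamma,\bot\Rightarrow\Delta$; $\wedge_L$: $\Gamma,\varphi,\psi\Rightarrow\Delta$ / $\Gamma,\varphi\wedge\psi\Rightarrow\Delta$; $\wedge_R$: $\Gamma\Rightarrow\varphi$,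 $\Gamma\Rightarrow\psi$ / $\Gamma\Rightarrow\varphi\wedge\psi$; $\vee_L$: $\Gamma,\varphi\Rightarrow\Delta$, $\Gamma,\psi\Rightarrow\Delta$ / $\Gamma,\varphi\vee\psi\Rightarrow\Delta$; $\vee_R^1$: $\Gamma\Rightarrow\varphi$ / $\Gamma\Rightarrow\varphi\vee\psi$; $\vee_R^2$: $\Gamma\Rightarrow\psi$ / $\Gamma\Rightarrow\varphi\vee\psi$; $\to_R$: $\Gamma,\varphi\Rightarrow\psi$ / $\Gamma\Rightarrow\varphi\to\psi$; $\to_L$: $\Gamma,\varphi\to\psi\Rightarrow\varphi$, $\Gamma,\psi\Rightarrow\Delta$ / $\Gamma,\varphi\to\psi\Rightarrow\Delta$. Write $B:=\rho_1\mathrel{\Box\!\!\to}\sigma_1,\dots,\rho_n\mathrel{\Box\!\!\to}\sigma_n$ and $E:=\{\varphi\Leftrightarrow\rho_i\}_{i\le n}$. Conditional rules: $\Box$: $E$, $\sigma_1,\dots,\sigma_n\Rightarrow\psi$ / $\Gamma,B\Rightarrow\varphi\mathrel{\Box\!\!\to}\psi$; $\Diamond$: $E$, $\varphi\Leftrightarrow\eta$, $\sigma_1,\dots,\sigma_n,\psi\Rightarrow\vartheta$ / $\Gamma,B,\varphi\mathrel{\Diamond\!\!\to}\psi\Rightarrow\eta\mathrel{\Diamond\!\!\to}\vartheta$; $\Box\Diamond$: $E$, $\sigma_1,\dots,\sigma_n,\psi\Rightarrow$ / $\Gamma,B,\varphi\mathrel{\Diamond\!\!\to}\psi\Rightarrow\Delta$;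 $\Box^{id}$: $E$, $\sigma_1,\dots,\sigma_n,\varphi\Rightarrow\psi$ / $\Gamma,B\Rightarrow\varphi\mathrel{\Box\!\!\to}\psi$; $\Box\Diamond^{id}$: $E$, $\sigma_1,\dots,\sigma_n,\varphi,\psi\Rightarrow$ / $\Gamma,B,\varphi\mathrel{\Diamond\!\!\to}\psi\Rightarrow\Delta$; $\Diamond^{id}$: $E$, $\varphi\Leftrightarrow\eta$, $\sigma_1,\dots,\sigma_n,\varphi,\psi\Rightarrow\vartheta$ / $\Gamma,B,\varphi\mathrel{\Diamond\!\!\to}\psi\Rightarrow\eta\mathrel{\Diamond\!\!\to}\vartheta$; $\mathsf{mp}_\Box$: $\Gamma,\varphi\mathrel{\Box\!\!\to}\psi\Rightarrow\varphi$, $\Gamma,\varphi\mathrel{\Box\!\!\to}\psi,\psi\Rightarrow\Delta$ / $\Gamma,\varphi\mathrel{\Box\!\!\to}\psi\Rightarrow\Delta$; $\mathsf{mp}_\Diamond$: $\Gamma\Rightarrow\varphi$, $\Gamma\Rightarrow\psi$ / $\Gamma\Rightarrow\varphi\mathrel{\Diamond\!\!\to}\psi$. Calculi: $\mathsf{S.ConstCKID}$ = propositional rules + $\Box^{id}$, $\Diamond^{id}$, $\Box\Diamond^{id}$; $\mathsf{S.ConstCKMP}$ = propositional rules + $\Box$, $\Diamond$, $\Box\Diamond$, $\mathsf{mp}_\Box$, $\mathsf{mp}_\Diamond$; $\mathsf{S.ConstCKMPID}$ = propositional rules + $\Box^{id}$, $\Diamond^{id}$, $\Box\Diamond^{id}$,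 $\mathsf{mp}_\Box$, $\mathsf{mp}_\Diamond$. Height of a derivation: length of its longest branch minus 1. A rule is admissible if its conclusion is derivable whenever its premisses are; height-preserving admissible if moreover the conclusion has a derivation of height at most the maximal height of the given derivations of the premisses. *)

(* Defs.v *)
From Stdlib Require Import List Permutation.
Import ListNotations.
Set Implicit Arguments.

Inductive form : Type :=
| Var : nat -> form
| Bot : form
| And : form -> form -> form
| Or  : form -> form -> form
| Imp : form -> form -> form
| BoxArr : form -> form -> form
| DiaArr : form -> form -> form.

Inductive calculus : Type := ConstCKID | ConstCKMP | ConstCKMPID.

Definition has_id (c : calculus) : bool :=
  match c with ConstCKMP => false | _ => true end.
Definition has_mp (c : calculus) : bool :=
  match c with ConstCKID => false | _ => true end.

(* Antecedents are finite multisets, represented by lists up to permutation;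
   succedents have at most one formula, represented by [option form].
   [dh c n G D] : the sequent G => D has a derivation in calculus c of height
   at most n (height = longest branch length minus 1, so axioms have height 0). *)

Definition boxes (l : list (form * form)) : list form :=
  map (fun p => BoxArr (fst p) (snd p)) l.
Definition conseqs (l : list (form * form)) : list form := map snd l.

Inductive dh (c : calculus) : nat -> list form -> option form -> Prop :=
| r_init : forall n G0 G p, Permutation G0 (Var p :: G) ->
    dh c n G0 (Some (Var p))
| r_botL : forall n G0 G D, Permutation G0 (Bot :: G) -> dh c n G0 D
| r_andL : forall n G0 G a b D, Permutation G0 (And a b :: G) ->
    dh c n (a :: b :: G) D -> dh c (S n) G0 D
| r_andR : forall n G a b,
    dh c n G (Some a) -> dh c n G (Some b) -> dh c (S n) G (Some (And a b))
| r_orL : forall n G0 G a b D, Permutation G0 (Or a b :: G) ->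
    dh c n (a :: G) D -> dh c n (b :: G) D -> dh c (S n) G0 D
| r_orR1 : forall n G a b, dh c n G (Some a) -> dh c (S n) G (Some (Or a b))
| r_orR2 : forall n G a b, dh c n G (Some b) -> dh c (S n) G (Some (Or a b))
| r_impR : forall n G a b, dh c n (a :: G) (Some b) -> dh c (S n) G (Some (Imp a b))
| r_impL : forall n G0 G a b D, Permutation G0 (Imp a b :: G) ->
    dh c n (Imp a b :: G) (Some a) -> dh c n (b :: G) D -> dh c (S n) G0 D
(* conditional rules; E = { phi <=> rho_i } given as premisses [phi] => rho_i and [rho_i] => phi *)
| r_box : forall n G0 G (l : list (form * form)) phi psi,
    has_id c = false ->
    Permutation G0 (G ++ boxes l) ->
    (forall p, In p l -> dh c n [phi] (Some (fst p)) /\ dh c n [fst p] (Some phi)) ->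
    dh c n (conseqs l) (Some psi) ->
    dh c (S n) G0 (Some (BoxArr phi psi))
| r_dia : forall n G0 G (l : list (form * form)) phi psi eta theta,
    has_id c = false ->
    Permutation G0 (DiaArr phi psi :: G ++ boxes l) ->
    (forall p, In p l -> dh c n [phi] (Some (fst p)) /\ dh c n [fst p] (Some phi)) ->
    dh c n [phi] (Some eta) -> dh c n [eta] (Some phi) ->
    dh c n (conseqs l ++ [psi]) (Some theta) ->
    dh c (S n) G0 (Some (DiaArr eta theta))
| r_boxdia : forall n G0 G (l : list (form * form)) phi psi D,
    has_id c = false ->
    Permutation G0 (DiaArr phi psi :: G ++ boxes l) ->
    (forall p, In p l -> dh c n [phi] (Some (fst p)) /\ dh c n [fst p] (Some phi)) ->
    dh c n (conseqs l ++ [psi]) None ->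
    dh c (S n) G0 D
| r_box_id : forall n G0 G (l : list (form * form)) phi psi,
    has_id c = true ->
    Permutation G0 (G ++ boxes l) ->
    (forall p, In p l -> dh c n [phi] (Some (fst p)) /\ dh c n [fst p] (Some phi)) ->
    dh c n (conseqs l ++ [phi]) (Some psi) ->
    dh c (S n) G0 (Some (BoxArr phi psi))
| r_dia_id : forall n G0 G (l : list (form * form)) phi psi eta theta,
    has_id c = true ->
    Permutation G0 (DiaArr phi psi :: G ++ boxes l) ->
    (forall p, In p l -> dh c n [phi] (Some (fst p)) /\ dh c n [fst p] (Some phi)) ->
    dh c n [phi] (Some eta) -> dh c n [eta] (Some phi) ->
    dh c n (conseqs l ++ [phi; psi]) (Some theta) ->
    dh c (S n) G0 (Some (DiaArr eta theta))
| r_boxdia_id : forall n G0 G (l : list (form * form)) phi psi D,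
    has_id c = true ->
    Permutation G0 (DiaArr phi psi :: G ++ boxes l) ->
    (forall p, In p l -> dh c n [phi] (Some (fst p)) /\ dh c n [fst p] (Some phi)) ->
    dh c n (conseqs l ++ [phi; psi]) None ->
    dh c (S n) G0 D
| r_mp_box : forall n G0 G phi psi D,
    has_mp c = true ->
    Permutation G0 (BoxArr phi psi :: G) ->
    dh c n (BoxArr phi psi :: G) (Some phi) ->
    dh c n (psi :: BoxArr phi psi :: G) D ->
    dh c (S n) G0 D
| r_mp_dia : forall n G phi psi,
    has_mp c = true ->
    dh c n G (Some phi) -> dh c n G (Some psi) ->
    dh c (S n) G (Some (DiaArr phi psi)).

Definition der (c : calculus) (G : list form) (D : option form) : Prop :=
  exists n, dh c n G D.

(* Main.v *)
Require Import Defs.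
From Stdlib Require Import List Permutation Lia Arith.
Import ListNotations.

Definition form_eq_dec : forall x y : form, {x = y} + {x <> y}.
Proof. decide equality; apply Nat.eq_dec. Defined.

Fixpoint cnt (x : form) (l : list form) : nat :=
  match l with [] => 0 | a :: l => (if form_eq_dec a x then 1 else 0) + cnt x l end.

Lemma cnt_occ x l : cnt x l = count_occ form_eq_dec l x.
Proof. induction l; simpl; auto. destruct (form_eq_dec a x); simpl; lia. Qed.

Lemma perm_cnt l1 l2 : Permutation l1 l2 -> forall x, cnt x l1 = cnt x l2.
Proof. intros H x. rewrite !cnt_occ. apply (Permutation_count_occ form_eq_dec); auto. Qed.

Lemma cnt_perm l1 l2 : (forall x, cnt x l1 = cnt x l2) -> Permutation l1 l2.
Proof. intros H. apply (Permutation_count_occ form_eq_dec). intro x. rewrite <- !cnt_occ; auto. Qed.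

Lemma cnt_app x l1 l2 : cnt x (l1 ++ l2) = cnt x l1 + cnt x l2.
Proof. induction l1; simpl; auto. rewrite IHl1; lia. Qed.

Lemma cnt_cons x a l : cnt x (a :: l) = (if form_eq_dec a x then 1 else 0) + cnt x l.
Proof. reflexivity. Qed.

Lemma boxes_app l1 l2 : boxes (l1 ++ l2) = boxes l1 ++ boxes l2.
Proof. apply map_app. Qed.
Lemma conseqs_app l1 l2 : conseqs (l1 ++ l2) = conseqs l1 ++ conseqs l2.
Proof. apply map_app. Qed.
Lemma boxes_cons p l : boxes (p :: l) = BoxArr (fst p) (snd p) :: boxes l.
Proof. reflexivity. Qed.
Lemma conseqs_cons p l : conseqs (p :: l) = snd p :: conseqs l.
Proof. reflexivity. Qed.

Lemma cnt_nil x : cnt x [] = 0.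
Proof. reflexivity. Qed.

Ltac psolve :=
  repeat match goal with H : @Permutation form _ _ |- _ => 
    let H' := fresh in pose proof (perm_cnt _ _ H) as H'; clear H end;
  apply cnt_perm; let x := fresh "x" in intro x;
  repeat match goal with H : forall y : form, cnt y _ = cnt y _ |- _ => specialize (H x) end;
  repeat rewrite ?boxes_app, ?conseqs_app, ?boxes_cons, ?conseqs_cons in *;
  repeat rewrite ?cnt_app, ?cnt_cons, ?cnt_nil in *;
  repeat match goal with
   | |- context [form_eq_dec ?a ?b] => destruct (form_eq_dec a b)
   | H : context [form_eq_dec ?a ?b] |- _ => destruct (form_eq_dec a b) end;
  lia.

Lemma cnt_In x L : 0 < cnt x L -> In x L.
Proof. induction L; simpl; [lia|]. destruct (form_eq_dec a x); auto. Qed.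
Lemma In_cnt x L : In x L -> 0 < cnt x L.
Proof. induction L; simpl; intro H; [tauto|]. destruct (form_eq_dec a x); [lia|]. destruct H; [congruence| apply IHL in H; lia]. Qed.

Lemma in_perm (x : form) L : In x L -> exists K, Permutation L (x :: K).
Proof. intro H. apply in_split in H as (l1 & l2 & ->). exists (l1 ++ l2). psolve. Qed.

Lemma perm_cons_cons (A : form) G' X K : Permutation (A :: G') (X :: K) ->
  (A = X /\ Permutation G' K) \/ (exists M, Permutation G' (X :: M) /\ Permutation K (A :: M)).
Proof.
  intro H. destruct (form_eq_dec A X) as [e|n].
  - left. subst. split; auto. eapply Permutation_cons_inv; eauto.
  - right. assert (In X G') as HI.
    { assert (In X (A :: G')) as HI by (eapply Permutation_in; [symmetry; exact H| left; auto]).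
      destruct HI; [congruence|auto]. }
    destruct (in_perm _ _ HI) as [M HM]. exists M. split; auto. psolve.
Qed.

Lemma perm_cons_app (A : form) G' K L : Permutation (A :: G') (K ++ L) ->
  (exists M, Permutation K (A :: M) /\ Permutation G' (M ++ L)) \/
  (exists M, Permutation L (A :: M) /\ Permutation G' (K ++ M)).
Proof.
  intro H. assert (In A (K ++ L)) as HI by (eapply Permutation_in; [exact H| left; auto]).
  apply in_app_or in HI as [HI|HI]; destruct (in_perm _ _ HI) as [M HM].
  - left. exists M. split; auto. psolve.
  - right. exists M. split; auto. psolve.
Qed.

Lemma boxes_perm l (A : form) M : Permutation (boxes l) (A :: M) ->
  exists p l'', A = BoxArr (fst p) (snd p) /\ Permutation l (p :: l'') /\ Permutation M (boxes l'').
Proof.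
  intro H. assert (In A (boxes l)) as HI by (eapply Permutation_in; [symmetry; exact H| left; auto]).
  unfold boxes in HI. apply in_map_iff in HI as (p & Hp & HI).
  apply in_split in HI as (l1 & l2 & ->).
  exists p, (l1 ++ l2). split; [auto|]. split.
  - symmetry. apply Permutation_middle.
  - subst A. psolve.
Qed.

Lemma perm_cc (phi : form) G Y H : Permutation (phi::phi::G) (Y :: H) ->
  (Y = phi /\ Permutation H (phi :: G)) \/
  (exists M, Permutation G (Y::M) /\ Permutation H (phi::phi::M)).
Proof.
  intro HP. destruct (form_eq_dec Y phi) as [e|n].
  - left. subst. split; auto. symmetry. eapply Permutation_cons_inv; eauto.
  - right. assert (In Y G) as HI.
    { apply cnt_In. apply perm_cnt with (x := Y) in HP. simpl in HP.
      destruct (form_eq_dec phi Y); [congruence|]. destruct (form_eq_dec Y Y); [|congruence]. lia. }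
    destruct (in_perm _ _ HI) as [M HM]. exists M. split; auto. psolve.
Qed.

Lemma perm_cc_app (phi : form) G K l : Permutation (phi::phi::G) (K ++ boxes l) ->
  (exists K', Permutation K (phi :: K') /\ Permutation (phi::G) (K' ++ boxes l)) \/
  (exists p l'', phi = BoxArr (fst p) (snd p) /\ Permutation l (p::p::l'') /\ Permutation G (K ++ boxes l'')).
Proof.
  intro HP. destruct (In_dec form_eq_dec phi K) as [HK|HK].
  - left. destruct (in_perm _ _ HK) as [K' HK']. exists K'. split; auto. psolve.
  - right. assert (In phi (boxes l)) as HB.
    { assert (In phi (K ++ boxes l)) as HI by (eapply Permutation_in; [exact HP| left; auto]).
      apply in_app_or in HI; tauto. }
    destruct (in_perm _ _ HB) as [M HM].
    destruct (boxes_perm _ _ _ HM) as (p & l1 & Hp & Hl1 & HM1).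
    assert (In phi (boxes l1)) as HB1.
    { apply cnt_In. pose proof (perm_cnt _ _ HP phi) as C. pose proof (perm_cnt _ _ HM phi) as C2.
      pose proof (perm_cnt _ _ HM1 phi) as C3.
      assert (cnt phi K = 0) as C4.
      { destruct (cnt phi K) eqn:E; auto. exfalso. apply HK, cnt_In. lia. }
      simpl in C, C2. rewrite cnt_app in C. destruct (form_eq_dec phi phi); [|congruence]. lia. }
    destruct (in_perm _ _ HB1) as [M1 HM2].
    destruct (boxes_perm _ _ _ HM2) as (q & l2 & Hq & Hl2 & HM3).
    assert (p = q) as <-.
    { destruct p, q; simpl in *. rewrite Hp in Hq. injection Hq; intros; subst; auto. }
    exists p, l2. split; auto. split.
    + rewrite Hl1. apply perm_skip. auto.
    + assert (Permutation (boxes l) (boxes (p :: p :: l2))) as HB2.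
      { apply Permutation_map. rewrite Hl1. apply perm_skip. auto. }
      subst phi. psolve.
Qed.
Ltac perm_close HP := first [ eassumption | (rewrite <- HP; eassumption) | (symmetry in HP; rewrite <- HP; eassumption)].

Lemma dh_perm c n : forall G D, dh c n G D -> forall G', Permutation G G' -> dh c n G' D.
Proof.
  induction n; intros G D H G' HP; inversion H; subst.
  all: first
   [ solve [eapply r_init; perm_close HP]
   | solve [eapply r_botL; perm_close HP]
   | solve [eapply r_andL; [perm_close HP | eassumption]]
   | solve [eapply r_orL; [perm_close HP | eassumption | eassumption]]
   | solve [eapply r_impL; [perm_close HP | eassumption | eassumption]]
   | solve [eapply r_box; [eassumption | perm_close HP | eassumption | eassumption]]
   | solve [eapply r_box_id; [eassumption | perm_close HP | eassumption | eassumption]]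
   | solve [eapply r_dia; [eassumption | perm_close HP | eassumption | eassumption | eassumption | eassumption]]
   | solve [eapply r_dia_id; [eassumption | perm_close HP | eassumption | eassumption | eassumption | eassumption]]
   | solve [eapply r_boxdia; [eassumption | perm_close HP | eassumption | eassumption]]
   | solve [eapply r_boxdia_id; [eassumption | perm_close HP | eassumption | eassumption]]
   | solve [eapply r_mp_box; [eassumption | perm_close HP | eassumption | eassumption]]
   | solve [eapply r_andR; eapply IHn; eauto]
   | solve [eapply r_orR1; eapply IHn; eauto]
   | solve [eapply r_orR2; eapply IHn; eauto]
   | solve [eapply r_impR; eapply IHn; [eassumption | apply perm_skip; exact HP]]
   | solve [eapply r_mp_dia; [eassumption | eapply IHn; eauto | eapply IHn; eauto]]
   | idtac ].
Qed.
Lemma dh_mono c n : forall G D, dh c n G D -> dh c (S n) G D.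
Proof.
  induction n; intros G D H; inversion H; subst.
  all: first
   [ solve [eapply r_init; eassumption]
   | solve [eapply r_botL; eassumption]
   | solve [eapply r_andL; [eassumption | eauto]]
   | solve [eapply r_orL; [eassumption | eauto | eauto]]
   | solve [eapply r_impL; [eassumption | eauto | eauto]]
   | solve [eapply r_box; [eassumption | eassumption | intros p Hp; split; apply IHn; eapply H3; eauto | eauto]]
   | solve [eapply r_box_id; [eassumption | eassumption | intros p Hp; split; apply IHn; eapply H3; eauto | eauto]]
   | solve [eapply r_dia; [eassumption | eassumption | intros p Hp; split; apply IHn; eapply H3; eauto | eauto | eauto | eauto]]
   | solve [eapply r_dia_id; [eassumption | eassumption | intros p Hp; split; apply IHn; eapply H3; eauto | eauto | eauto | eauto]]
   | solve [eapply r_boxdia; [eassumption | eassumption | intros p Hp; split; apply IHn; eapply H3; eauto | eauto]]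
   | solve [eapply r_boxdia_id; [eassumption | eassumption | intros p Hp; split; apply IHn; eapply H3; eauto | eauto]]
   | solve [eapply r_mp_box; [eassumption | eassumption | eauto | eauto]]
   | solve [eapply r_andR; eauto]
   | solve [eapply r_orR1; eauto]
   | solve [eapply r_orR2; eauto]
   | solve [eapply r_impR; eauto]
   | solve [eapply r_mp_dia; eauto]
   | idtac ].
Qed.

Lemma dh_mono_le c n m G D : dh c n G D -> n <= m -> dh c m G D.
Proof. intros H Hle. induction Hle; auto. apply dh_mono; auto. Qed.
Lemma dh_weak c n : forall G D phi, dh c n G D -> dh c n (phi :: G) D.
Proof.
  induction n; intros G D phi H; inversion H; subst.
  all: match goal with
   | Hp : Permutation _ (Var ?p :: ?K) |- dh _ _ _ (Some (Var ?p)) =>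
       solve [eapply r_init with (G := phi :: K); psolve]
   | Hp : Permutation _ (Bot :: ?K) |- _ => solve [eapply r_botL with (G := phi :: K); psolve]
   | Hp : Permutation _ (And ?a ?b :: ?K), Hd : dh _ _ (?a :: ?b :: ?K) _ |- _ =>
       solve [eapply r_andL with (G := phi :: K) (a := a) (b := b); [psolve | eapply dh_perm; [exact (IHn _ _ phi Hd) | psolve]]]
   | Hp : Permutation _ (Or ?a ?b :: ?K), Hd1 : dh _ _ (?a :: ?K) _, Hd2 : dh _ _ (?b :: ?K) _ |- _ =>
       solve [eapply r_orL with (G := phi :: K) (a := a) (b := b); [psolve | eapply dh_perm; [exact (IHn _ _ phi Hd1) | psolve]
                | eapply dh_perm; [exact (IHn _ _ phi Hd2) | psolve]]]
   | Hp : Permutation _ (Imp ?a ?b :: ?K), Hd1 : dh _ _ (Imp ?a ?b :: ?K) _, Hd2 : dh _ _ (?b :: ?K) _ |- _ =>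
       solve [eapply r_impL with (G := phi :: K) (a := a) (b := b); [psolve | eapply dh_perm; [exact (IHn _ _ phi Hd1) | psolve]
                | eapply dh_perm; [exact (IHn _ _ phi Hd2) | psolve]]]
   | Hp : Permutation _ (BoxArr ?a ?b :: ?K), Hd1 : dh _ _ (BoxArr ?a ?b :: ?K) _, Hd2 : dh _ _ (?b :: BoxArr ?a ?b :: ?K) _ |- _ =>
       solve [eapply r_mp_box with (G := phi :: K) (phi := a) (psi := b); [eassumption | psolve | eapply dh_perm; [exact (IHn _ _ phi Hd1) | psolve]
                | eapply dh_perm; [exact (IHn _ _ phi Hd2) | psolve]]]
   | Hp : Permutation _ (?K ++ boxes ?l) |- _ =>
       first [ solve [eapply r_box with (G := phi :: K); eauto; psolve]
             | solve [eapply r_box_id with (G := phi :: K); eauto; psolve] ]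
   | Hp : Permutation _ (DiaArr _ _ :: ?K ++ boxes ?l) |- _ =>
       first [ solve [eapply r_dia with (G := phi :: K); eauto; psolve]
             | solve [eapply r_dia_id with (G := phi :: K); eauto; psolve]
             | solve [eapply r_boxdia with (G := phi :: K); eauto; psolve]
             | solve [eapply r_boxdia_id with (G := phi :: K); eauto; psolve] ]
   | _ => first
     [ solve [eapply r_andR; eauto]
     | solve [eapply r_orR1; eauto]
     | solve [eapply r_orR2; eauto]
     | solve [eapply r_impR; eapply dh_perm; [apply IHn; eassumption | apply perm_swap]]
     | solve [eapply r_mp_dia; eauto] ]
   end.
Qed.

Lemma dh_wR c n : forall G phi, dh c n G None -> dh c n G (Some phi).
Proof.
  induction n; intros G phi H; inversion H; subst.
  all: first
   [ solve [eapply r_botL; eassumption]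
   | solve [eapply r_andL; [eassumption | eauto]]
   | solve [eapply r_orL; [eassumption | eauto | eauto]]
   | solve [eapply r_impL; [eassumption | eauto | eauto]]
   | solve [eapply r_boxdia; eassumption]
   | solve [eapply r_boxdia_id; eassumption]
   | solve [eapply r_mp_box; [eassumption | eassumption | eauto | eauto]] ].
Qed.

Lemma dh_weak_app c n G D H : dh c n G D -> dh c n (H ++ G) D.
Proof. induction H; simpl; auto. intro; apply dh_weak; auto. Qed.

Lemma perm_ctx0 (X : form) K M : Permutation K (X :: M) -> Permutation K (X :: M).
Proof. auto. Qed.
Lemma perm_ctx1 (X a : form) K M : Permutation K (X :: M) -> Permutation (a :: K) (X :: a :: M).
Proof. intros; psolve. Qed.
Lemma perm_ctx2 (X a b : form) K M : Permutation K (X :: M) -> Permutation (a :: b :: K) (X :: a :: b :: M).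
Proof. intros; psolve. Qed.

Ltac ih_tac IHn :=
  match goal with Hd : dh _ _ _ _, HM : Permutation _ (_ :: _) |- _ =>
    eapply dh_perm; [eapply IHn; [exact Hd | first [apply perm_ctx2 | apply perm_ctx1 | apply perm_ctx0]; exact HM] | psolve]
  end.

Lemma inv_gen c (X : form) (Ys : list form)
  (N1 : forall p, X <> Var p) (N2 : X <> Bot) (N3 : forall a b, X <> BoxArr a b)
  (N4 : forall a b, X <> DiaArr a b)
  (HA : forall a b, X = And a b -> forall n K D, dh c n (a::b::K) D -> dh c (S n) (Ys ++ K) D)
  (HO : forall a b, X = Or a b -> forall n K D, dh c n (a::K) D -> dh c n (b::K) D -> dh c (S n) (Ys ++ K) D)
  (HI : forall a b, X = Imp a b -> forall n K D, dh c n (Imp a b :: K) (Some a) -> dh c n (b::K) D ->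
          dh c (S n) (Ys ++ K) D) :
  forall n G0 D H, dh c n G0 D -> Permutation G0 (X :: H) -> dh c n (Ys ++ H) D.
Proof.
  induction n; intros G0 D H Hd HP; symmetry in HP; inversion Hd; subst.
  all: try match goal with
  | Hp : Permutation ?Z (?Y :: ?K) |- _ =>
      let HH := fresh in
      assert (HH : Permutation (X :: H) (Y :: K)) by (rewrite HP; exact Hp);
      apply perm_cons_cons in HH; destruct HH as [[? ?]|(M & HM1 & HM2)]; [subst X|]
  | Hp : Permutation ?Z (?K ++ boxes ?l) |- _ =>
      let HH := fresh in
      assert (HH : Permutation (X :: H) (K ++ boxes l)) by (rewrite HP; exact Hp);
      apply perm_cons_app in HH; destruct HH as [(M & HM1 & HM2)|(M & HM1 & HM2)];
      [ first [ solve [eapply r_box with (G := Ys ++ M) (l := l); eauto; psolve]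
              | solve [eapply r_box_id with (G := Ys ++ M) (l := l); eauto; psolve] ]
      | apply boxes_perm in HM1; destruct HM1 as (? & ? & ? & ? & ?); exfalso; eapply N3; eauto ]
  end.
  all: try solve [exfalso; first [solve [eapply N1; eauto] | solve [eapply N2; eauto] | solve [eapply N3; eauto] | solve [eapply N4; eauto]]].
  all: try solve [eapply HA; eauto].
  all: try solve [eapply dh_mono; eapply HA; eauto].
  all: try solve [eapply HO; eauto].
  all: try solve [eapply dh_mono; eapply HO; eauto].
  all: try solve [eapply HI; eauto].
  all: try solve [eapply dh_mono; eapply HI; eauto].
  all: try match goal with
  | Hp : Permutation _ (Var ?p :: ?K), HM1 : Permutation _ (_ :: ?M) |- _ =>
      solve [eapply r_init with (G := Ys ++ M); psolve]
  | Hp : Permutation _ (Bot :: ?K), HM1 : Permutation _ (_ :: ?M) |- _ =>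
      solve [eapply r_botL with (G := Ys ++ M); psolve]
  | Hp : Permutation _ (And ?a ?b :: ?K), HM1 : Permutation _ (_ :: ?M) |- _ =>
      solve [eapply r_andL with (G := Ys ++ M) (a := a) (b := b); [psolve | ih_tac IHn]]
  | Hp : Permutation _ (Or ?a ?b :: ?K), HM1 : Permutation _ (_ :: ?M) |- _ =>
      solve [eapply r_orL with (G := Ys ++ M) (a := a) (b := b); [psolve | ih_tac IHn | ih_tac IHn]]
  | Hp : Permutation _ (Imp ?a ?b :: ?K), HM1 : Permutation _ (_ :: ?M) |- _ =>
      solve [eapply r_impL with (G := Ys ++ M) (a := a) (b := b); [psolve | ih_tac IHn | ih_tac IHn]]
  | Hp : Permutation _ (BoxArr ?a ?b :: ?K), HM1 : Permutation _ (_ :: ?M) |- _ =>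
      solve [eapply r_mp_box with (G := Ys ++ M) (phi := a) (psi := b); [eassumption | psolve | ih_tac IHn | ih_tac IHn]]
  | Hp : Permutation _ (DiaArr ?a ?b :: ?K ++ boxes ?l), HM1 : Permutation _ (_ :: ?M),
    HM2 : Permutation (?K ++ boxes ?l) (_ :: ?M) |- _ =>
      symmetry in HM2; apply perm_cons_app in HM2; destruct HM2 as [(M' & HM3 & HM4)|(M' & HM3 & HM4)];
      [ first [ solve [eapply r_dia with (G := Ys ++ M') (l := l) (phi := a) (psi := b); eauto; psolve]
              | solve [eapply r_dia_id with (G := Ys ++ M') (l := l) (phi := a) (psi := b); eauto; psolve]
              | solve [eapply r_boxdia with (G := Ys ++ M') (l := l) (phi := a) (psi := b); eauto; psolve]
              | solve [eapply r_boxdia_id with (G := Ys ++ M') (l := l) (phi := a) (psi := b); eauto; psolve] ]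
      | apply boxes_perm in HM3; destruct HM3 as (? & ? & ? & ? & ?); exfalso; eapply N3; eauto ]
  end.
  all: try solve [eapply r_andR; eapply IHn; eauto; symmetry; exact HP].
  all: try solve [eapply r_orR1; eapply IHn; eauto; symmetry; exact HP].
  all: try solve [eapply r_orR2; eapply IHn; eauto; symmetry; exact HP].
  all: try solve [eapply r_mp_dia; [eassumption | eapply IHn; eauto; symmetry; exact HP | eapply IHn; eauto; symmetry; exact HP]].
  all: try solve [eapply r_impR; eapply dh_perm; [eapply IHn; [eassumption | rewrite <- HP; apply perm_swap] | psolve]].
  all: try solve [eapply dh_perm; [eapply HA; [reflexivity | eassumption] | psolve]].
  all: try solve [eapply dh_perm; [eapply HO; [reflexivity | eassumption | eassumption] | psolve]].
  all: try solve [eapply dh_perm; [eapply HI; [reflexivity | eassumption | eassumption] | psolve]].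
Qed.
Lemma andL_inv c n G0 D a b H : dh c n G0 D -> Permutation G0 (And a b :: H) -> dh c n (a :: b :: H) D.
Proof.
  intros Hd HP. apply (@inv_gen c (And a b) [a; b]) with (n := n) (G0 := G0); auto; intros; try discriminate.
  injection H0; intros; subst. apply dh_mono; auto.
Qed.
Lemma orL_inv_l c n G0 D a b H : dh c n G0 D -> Permutation G0 (Or a b :: H) -> dh c n (a :: H) D.
Proof.
  intros Hd HP. apply (@inv_gen c (Or a b) [a]) with (n := n) (G0 := G0); auto; intros; try discriminate.
  injection H0; intros; subst. apply dh_mono; auto.
Qed.
Lemma orL_inv_r c n G0 D a b H : dh c n G0 D -> Permutation G0 (Or a b :: H) -> dh c n (b :: H) D.
Proof.
  intros Hd HP. apply (@inv_gen c (Or a b) [b]) with (n := n) (G0 := G0); auto; intros; try discriminate.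
  injection H0; intros; subst. apply dh_mono; auto.
Qed.
Lemma impL_inv_r c n G0 D a b H : dh c n G0 D -> Permutation G0 (Imp a b :: H) -> dh c n (b :: H) D.
Proof.
  intros Hd HP. apply (@inv_gen c (Imp a b) [b]) with (n := n) (G0 := G0); auto; intros; try discriminate.
  injection H0; intros; subst. apply dh_mono; auto.
Qed.

Lemma cc_in (Y X : form) G0 K L : Permutation G0 (Y :: K) -> Permutation G0 (X :: X :: L) ->
  exists K', Permutation (X :: L) (Y :: K').
Proof.
  intros H1 H2. apply in_perm.
  assert (In Y (X :: X :: L)) as HI.
  { eapply Permutation_in; [exact H2|]. eapply Permutation_in; [symmetry; exact H1| left; auto]. }
  simpl in *; tauto.
Qed.

Lemma E_sub (P : form * form -> Prop) l p l'' :
  (forall q, In q l -> P q) -> Permutation l (p :: p :: l'') -> forall q, In q (p :: l'') -> P q.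
Proof. intros H Hl q Hq. apply H. eapply Permutation_in; [symmetry; exact Hl|]. simpl in *; tauto. Qed.

Lemma conseqs_perm l l' : Permutation l l' -> Permutation (conseqs l) (conseqs l').
Proof. apply Permutation_map. Qed.
Lemma boxes_perm' l l' : Permutation l l' -> Permutation (boxes l) (boxes l').
Proof. apply Permutation_map. Qed.

Ltac ihc IH n X L H := apply (IH n ltac:(lia) _ _ X L H); psolve.

Lemma contr_gen c m : forall Z D X L, dh c m Z D -> Permutation Z (X :: X :: L) -> dh c m (X :: L) D.
Proof.
  induction m as [m IH] using (well_founded_induction lt_wf).
  intros Z D X L Hd HP. revert IH HP.
  destruct Hd as
  [ n G0 G p Hp
  | n G0 G D0 Hp
  | n G0 G a b D0 Hp H1
  | n G a b H1 H2
  | n G0 G a b D0 Hp H1 H2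
  | n G a b H1
  | n G a b H1
  | n G a b H1
  | n G0 G a b D0 Hp H1 H2
  | n G0 G l f s Hc Hp HE H1
  | n G0 G l f s e t Hc Hp HE He1 He2 H1
  | n G0 G l f s D0 Hc Hp HE H1
  | n G0 G l f s Hc Hp HE H1
  | n G0 G l f s e t Hc Hp HE He1 He2 H1
  | n G0 G l f s D0 Hc Hp HE H1
  | n G0 G f s D0 Hc Hp H1 H2
  | n G f s Hc H1 H2 ]; intros IH HP.
  - destruct (cc_in _ _ _ _ _ Hp HP) as [K' HK']. eapply r_init; exact HK'.
  - destruct (cc_in _ _ _ _ _ Hp HP) as [K' HK']. eapply r_botL; exact HK'.
  -
    assert (HH : Permutation (X::X::L) (And a b :: G)) by (rewrite <- HP; exact Hp).
    apply perm_cc in HH. destruct HH as [[Heq HG]|(M & HM1 & HM2)].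
    + subst X.
      assert (H3 : dh c n (a::b::a::b::L) D0) by (eapply andL_inv; [exact H1 | psolve]).
      assert (H4 : dh c n (a::b::b::L) D0) by ihc IH n a (b::b::L) H3.
      assert (H5 : dh c n (b::a::L) D0) by ihc IH n b (a::L) H4.
      eapply r_andL with (G := L) (a:=a) (b:=b); [psolve | eapply dh_perm; [exact H5 | psolve]].
    + assert (H4 : dh c n (X::a::b::M) D0) by ihc IH n X (a::b::M) H1.
      eapply r_andL with (G := X :: M) (a:=a) (b:=b); [psolve | eapply dh_perm; [exact H4 | psolve]].
  - apply r_andR; [ihc IH n X L H1 | ihc IH n X L H2].
  -
    assert (HH : Permutation (X::X::L) (Or a b :: G)) by (rewrite <- HP; exact Hp).
    apply perm_cc in HH. destruct HH as [[Heq HG]|(M & HM1 & HM2)].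
    + subst X.
      assert (H3 : dh c n (a::a::L) D0) by (eapply orL_inv_l with (b := b); [exact H1 | psolve]).
      assert (H4 : dh c n (b::b::L) D0) by (eapply orL_inv_r with (a := a); [exact H2 | psolve]).
      assert (H5 : dh c n (a::L) D0) by ihc IH n a L H3.
      assert (H6 : dh c n (b::L) D0) by ihc IH n b L H4.
      eapply r_orL with (G := L) (a:=a) (b:=b); [psolve | exact H5 | exact H6].
    + assert (H4 : dh c n (X::a::M) D0) by ihc IH n X (a::M) H1.
      assert (H5 : dh c n (X::b::M) D0) by ihc IH n X (b::M) H2.
      eapply r_orL with (G := X :: M) (a:=a) (b:=b); [psolve | eapply dh_perm; [exact H4 | psolve] | eapply dh_perm; [exact H5 | psolve]].
  - apply r_orR1; ihc IH n X L H1.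
  - apply r_orR2; ihc IH n X L H1.
  - apply r_impR. assert (H4 : dh c n (X::a::L) (Some b)) by ihc IH n X (a::L) H1.
    eapply dh_perm; [exact H4 | psolve].
  -
    assert (HH : Permutation (X::X::L) (Imp a b :: G)) by (rewrite <- HP; exact Hp).
    apply perm_cc in HH. destruct HH as [[Heq HG]|(M & HM1 & HM2)].
    + subst X.
      assert (H3 : dh c n (Imp a b :: L) (Some a)) by ihc IH n (Imp a b) L H1.
      assert (H4 : dh c n (b::b::L) D0) by (eapply impL_inv_r with (a := a); [exact H2 | psolve]).
      assert (H5 : dh c n (b::L) D0) by ihc IH n b L H4.
      eapply r_impL with (G := L) (a:=a) (b:=b); [psolve | exact H3 | exact H5].
    + assert (H4 : dh c n (X::Imp a b::M) (Some a)) by ihc IH n X (Imp a b::M) H1.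
      assert (H5 : dh c n (X::b::M) D0) by ihc IH n X (b::M) H2.
      eapply r_impL with (G := X :: M) (a:=a) (b:=b); [psolve | eapply dh_perm; [exact H4 | psolve] | eapply dh_perm; [exact H5 | psolve]].
  -
    assert (HH : Permutation (X::X::L) (G ++ boxes l)) by (rewrite <- HP; exact Hp).
    apply perm_cc_app in HH. destruct HH as [(K' & HK1 & HK2)|(p & l'' & Hx & Hl & HG)].
    + eapply r_box with (G := K') (l := l); [exact Hc | exact HK2 | exact HE | exact H1].
    + subst X. eapply r_box with (G := G) (l := p :: l''); [exact Hc | psolve | eapply E_sub; [exact HE | exact Hl] | ].
      pose proof (conseqs_perm _ _ Hl). eapply dh_perm; [apply (IH n ltac:(lia) _ _ (snd p) (conseqs l'') H1); psolve | psolve].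
  -
    assert (HH : Permutation (X::X::L) (DiaArr f s :: (G ++ boxes l))) by (rewrite <- HP; exact Hp).
    apply perm_cc in HH. destruct HH as [[Heq HG]|(M & HM1 & HM2)].
    + subst X. symmetry in HG. apply perm_cons_app in HG. destruct HG as [(M & HM1 & HM2)|(M & HM1 & HM2)].
      * eapply r_dia with (G := M) (l := l) (phi := f) (psi := s); [exact Hc | psolve | exact HE | exact He1 | exact He2 | exact H1].
      * apply boxes_perm in HM1 as (q & l2 & Hq & _ & _); discriminate.
    + symmetry in HM2. apply perm_cc_app in HM2. destruct HM2 as [(K' & HK1 & HK2)|(p & l'' & Hx & Hl & HG)].
      * eapply r_dia with (G := K') (l := l) (phi := f) (psi := s); [exact Hc | psolve | exact HE | exact He1 | exact He2 | exact H1].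
      * subst X. eapply r_dia with (G := G) (l := p :: l'') (phi := f) (psi := s); [exact Hc | psolve | eapply E_sub; [exact HE | exact Hl] | exact He1 | exact He2 | ].
        pose proof (conseqs_perm _ _ Hl). eapply dh_perm; [apply (IH n ltac:(lia) _ _ (snd p) (conseqs l'' ++ [s]) H1); psolve | psolve].
  -
    assert (HH : Permutation (X::X::L) (DiaArr f s :: (G ++ boxes l))) by (rewrite <- HP; exact Hp).
    apply perm_cc in HH. destruct HH as [[Heq HG]|(M & HM1 & HM2)].
    + subst X. symmetry in HG. apply perm_cons_app in HG. destruct HG as [(M & HM1 & HM2)|(M & HM1 & HM2)].
      * eapply r_boxdia with (G := M) (l := l) (phi := f) (psi := s); [exact Hc | psolve | exact HE | exact H1].
      * apply boxes_perm in HM1 as (q & l2 & Hq & _ & _); discriminate.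
    + symmetry in HM2. apply perm_cc_app in HM2. destruct HM2 as [(K' & HK1 & HK2)|(p & l'' & Hx & Hl & HG)].
      * eapply r_boxdia with (G := K') (l := l) (phi := f) (psi := s); [exact Hc | psolve | exact HE | exact H1].
      * subst X. eapply r_boxdia with (G := G) (l := p :: l'') (phi := f) (psi := s); [exact Hc | psolve | eapply E_sub; [exact HE | exact Hl] | ].
        pose proof (conseqs_perm _ _ Hl). eapply dh_perm; [apply (IH n ltac:(lia) _ _ (snd p) (conseqs l'' ++ [s]) H1); psolve | psolve].
  -
    assert (HH : Permutation (X::X::L) (G ++ boxes l)) by (rewrite <- HP; exact Hp).
    apply perm_cc_app in HH. destruct HH as [(K' & HK1 & HK2)|(p & l'' & Hx & Hl & HG)].
    + eapply r_box_id with (G := K') (l := l); [exact Hc | exact HK2 | exact HE | exact H1].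
    + subst X. eapply r_box_id with (G := G) (l := p :: l''); [exact Hc | psolve | eapply E_sub; [exact HE | exact Hl] | ].
      pose proof (conseqs_perm _ _ Hl). eapply dh_perm; [apply (IH n ltac:(lia) _ _ (snd p) (conseqs l'' ++ [f]) H1); psolve | psolve].
  -
    assert (HH : Permutation (X::X::L) (DiaArr f s :: (G ++ boxes l))) by (rewrite <- HP; exact Hp).
    apply perm_cc in HH. destruct HH as [[Heq HG]|(M & HM1 & HM2)].
    + subst X. symmetry in HG. apply perm_cons_app in HG. destruct HG as [(M & HM1 & HM2)|(M & HM1 & HM2)].
      * eapply r_dia_id with (G := M) (l := l) (phi := f) (psi := s); [exact Hc | psolve | exact HE | exact He1 | exact He2 | exact H1].
      * apply boxes_perm in HM1 as (q & l2 & Hq & _ & _); discriminate.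
    + symmetry in HM2. apply perm_cc_app in HM2. destruct HM2 as [(K' & HK1 & HK2)|(p & l'' & Hx & Hl & HG)].
      * eapply r_dia_id with (G := K') (l := l) (phi := f) (psi := s); [exact Hc | psolve | exact HE | exact He1 | exact He2 | exact H1].
      * subst X. eapply r_dia_id with (G := G) (l := p :: l'') (phi := f) (psi := s); [exact Hc | psolve | eapply E_sub; [exact HE | exact Hl] | exact He1 | exact He2 | ].
        pose proof (conseqs_perm _ _ Hl). eapply dh_perm; [apply (IH n ltac:(lia) _ _ (snd p) (conseqs l'' ++ [f; s]) H1); psolve | psolve].
  -
    assert (HH : Permutation (X::X::L) (DiaArr f s :: (G ++ boxes l))) by (rewrite <- HP; exact Hp).
    apply perm_cc in HH. destruct HH as [[Heq HG]|(M & HM1 & HM2)].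
    + subst X. symmetry in HG. apply perm_cons_app in HG. destruct HG as [(M & HM1 & HM2)|(M & HM1 & HM2)].
      * eapply r_boxdia_id with (G := M) (l := l) (phi := f) (psi := s); [exact Hc | psolve | exact HE | exact H1].
      * apply boxes_perm in HM1 as (q & l2 & Hq & _ & _); discriminate.
    + symmetry in HM2. apply perm_cc_app in HM2. destruct HM2 as [(K' & HK1 & HK2)|(p & l'' & Hx & Hl & HG)].
      * eapply r_boxdia_id with (G := K') (l := l) (phi := f) (psi := s); [exact Hc | psolve | exact HE | exact H1].
      * subst X. eapply r_boxdia_id with (G := G) (l := p :: l'') (phi := f) (psi := s); [exact Hc | psolve | eapply E_sub; [exact HE | exact Hl] | ].
        pose proof (conseqs_perm _ _ Hl). eapply dh_perm; [apply (IH n ltac:(lia) _ _ (snd p) (conseqs l'' ++ [f; s]) H1); psolve | psolve].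
  -
    assert (HH : Permutation (X::X::L) (BoxArr f s :: G)) by (rewrite <- HP; exact Hp).
    apply perm_cc in HH. destruct HH as [[Heq HG]|(M & HM1 & HM2)].
    + subst X.
      assert (H3 : dh c n (BoxArr f s :: L) (Some f)) by ihc IH n (BoxArr f s) L H1.
      assert (H4 : dh c n (BoxArr f s :: s :: L) D0) by ihc IH n (BoxArr f s) (s :: L) H2.
      eapply r_mp_box with (G := L) (phi := f) (psi := s); [exact Hc | psolve | exact H3 | eapply dh_perm; [exact H4 | psolve]].
    + assert (H3 : dh c n (X :: BoxArr f s :: M) (Some f)) by ihc IH n X (BoxArr f s :: M) H1.
      assert (H4 : dh c n (X :: s :: BoxArr f s :: M) D0) by ihc IH n X (s :: BoxArr f s :: M) H2.
      eapply r_mp_box with (G := X :: M) (phi := f) (psi := s); [exact Hc | psolve | eapply dh_perm; [exact H3 | psolve] | eapply dh_perm; [exact H4 | psolve]].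
  - apply r_mp_dia; [exact Hc | ihc IH n X L H1 | ihc IH n X L H2].
Qed.
Lemma contr c n X L D : dh c n (X :: X :: L) D -> dh c n (X :: L) D.
Proof. intro H. eapply contr_gen; [exact H | apply Permutation_refl]. Qed.

Lemma dh_contr_app c n H : forall K D, dh c n (H ++ H ++ K) D -> dh c n (H ++ K) D.
Proof.
  induction H as [|x H IHH]; intros K D Hd; simpl in *; auto.
  assert (Hd2 : dh c n (x :: x :: H ++ H ++ K) D) by (eapply dh_perm; [exact Hd | psolve]).
  apply contr in Hd2.
  assert (Hd3 : dh c n (H ++ H ++ x :: K) D) by (eapply dh_perm; [exact Hd2 | psolve]).
  apply IHH in Hd3. eapply dh_perm; [exact Hd3 | psolve].
Qed.

Lemma der_perm c G G' D : der c G D -> Permutation G G' -> der c G' D.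
Proof. intros [n H] HP. exists n. eapply dh_perm; [exact H | exact HP]. Qed.
Lemma der_weak c G G' H D : der c G D -> Permutation G' (H ++ G) -> der c G' D.
Proof. intros [n Hd] HP. exists n. eapply dh_perm; [apply dh_weak_app; exact Hd | symmetry; exact HP]. Qed.
Lemma der_wR c G D : der c G None -> der c G D.
Proof. intros [n H]. exists n. destruct D; auto. apply dh_wR; auto. Qed.
Lemma der_contr_app c H K D : der c (H ++ H ++ K) D -> der c (H ++ K) D.
Proof. intros [n Hd]. exists n. apply dh_contr_app; auto. Qed.
Lemma der_contr c X L D : der c (X :: X :: L) D -> der c (X :: L) D.
Proof. intros [n Hd]. exists n. apply contr; auto. Qed.
Lemma dh_der c n G D : dh c n G D -> der c G D.
Proof. intro H; exists n; auto. Qed.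

Lemma lift2 c G1 D1 G2 D2 : der c G1 D1 -> der c G2 D2 -> exists n, dh c n G1 D1 /\ dh c n G2 D2.
Proof.
  intros [n1 H1] [n2 H2]. exists (Nat.max n1 n2). split; eapply dh_mono_le; eauto; lia.
Qed.

Arguments lift2 {c G1 D1 G2 D2}.

Definition Eder c phi (l : list (form * form)) :=
  forall p, In p l -> der c [phi] (Some (fst p)) /\ der c [fst p] (Some phi).

Lemma E_bound c phi l : Eder c phi l -> exists N, forall m, N <= m -> forall p, In p l ->
  dh c m [phi] (Some (fst p)) /\ dh c m [fst p] (Some phi).
Proof.
  induction l as [|q l IHl]; intro HE.
  - exists 0. intros m _ p [].
  - destruct IHl as [N HN]. { intros p Hp. apply HE. right; auto. }
    destruct (HE q (or_introl eq_refl)) as [[n1 H1] [n2 H2]].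
    exists (Nat.max N (Nat.max n1 n2)). intros m Hm p [<-|Hp].
    + split; eapply dh_mono_le; eauto; lia.
    + apply HN; auto. lia.
Qed.

Arguments E_bound {c phi l}.

Lemma E_dh c n phi l : (forall p, In p l -> dh c n [phi] (Some (fst p)) /\ dh c n [fst p] (Some phi)) -> Eder c phi l.
Proof. intros H p Hp. destruct (H p Hp). split; eexists; eauto. Qed.

Lemma der_init c G p : In (Var p) G -> der c G (Some (Var p)).
Proof. intro H. destruct (in_perm _ _ H) as [K HK]. exists 0. eapply r_init; exact HK. Qed.
Lemma der_bot c G D : In Bot G -> der c G D.
Proof. intro H. destruct (in_perm _ _ H) as [K HK]. exists 0. eapply r_botL; exact HK. Qed.
Lemma der_andL c G0 G a b D : Permutation G0 (And a b :: G) -> der c (a::b::G) D -> der c G0 D.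
Proof. intros HP [n H]. exists (S n). eapply r_andL; [exact HP | exact H]. Qed.
Lemma der_andR c G a b : der c G (Some a) -> der c G (Some b) -> der c G (Some (And a b)).
Proof. intros H1 H2. destruct (lift2 H1 H2) as (n & ? & ?). exists (S n). apply r_andR; auto. Qed.
Lemma der_orL c G0 G a b D : Permutation G0 (Or a b :: G) -> der c (a::G) D -> der c (b::G) D -> der c G0 D.
Proof. intros HP H1 H2. destruct (lift2 H1 H2) as (n & ? & ?). exists (S n). eapply r_orL; [exact HP | eassumption | eassumption]. Qed.
Lemma der_orR1 c G a b : der c G (Some a) -> der c G (Some (Or a b)).
Proof. intros [n H]. exists (S n). apply r_orR1; auto. Qed.
Lemma der_orR2 c G a b : der c G (Some b) -> der c G (Some (Or a b)).
Proof. intros [n H]. exists (S n). apply r_orR2; auto. Qed.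
Lemma der_impR c G a b : der c (a :: G) (Some b) -> der c G (Some (Imp a b)).
Proof. intros [n H]. exists (S n). apply r_impR; auto. Qed.
Lemma der_impL c G0 G a b D : Permutation G0 (Imp a b :: G) -> der c (Imp a b :: G) (Some a) -> der c (b::G) D -> der c G0 D.
Proof. intros HP H1 H2. destruct (lift2 H1 H2) as (n & ? & ?). exists (S n). eapply r_impL; [exact HP | eassumption | eassumption]. Qed.
Lemma der_mp_box c G0 G phi psi D : has_mp c = true -> Permutation G0 (BoxArr phi psi :: G) ->
  der c (BoxArr phi psi :: G) (Some phi) -> der c (psi :: BoxArr phi psi :: G) D -> der c G0 D.
Proof. intros Hc HP H1 H2. destruct (lift2 H1 H2) as (n & ? & ?). exists (S n). eapply r_mp_box; [exact Hc | exact HP | eassumption | eassumption]. Qed.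
Lemma der_mp_dia c G phi psi : has_mp c = true -> der c G (Some phi) -> der c G (Some psi) -> der c G (Some (DiaArr phi psi)).
Proof. intros Hc H1 H2. destruct (lift2 H1 H2) as (n & ? & ?). exists (S n). apply r_mp_dia; auto. Qed.

Lemma der_box c G0 G l phi psi : has_id c = false -> Permutation G0 (G ++ boxes l) -> Eder c phi l ->
  der c (conseqs l) (Some psi) -> der c G0 (Some (BoxArr phi psi)).
Proof.
  intros Hc HP HE [n1 H1]. destruct (E_bound HE) as [N HN]. exists (S (Nat.max N n1)).
  eapply r_box; [exact Hc | exact HP | apply HN; lia | eapply dh_mono_le; [exact H1 | lia]].
Qed.
Lemma der_box_id c G0 G l phi psi : has_id c = true -> Permutation G0 (G ++ boxes l) -> Eder c phi l ->
  der c (conseqs l ++ [phi]) (Some psi) -> der c G0 (Some (BoxArr phi psi)).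
Proof.
  intros Hc HP HE [n1 H1]. destruct (E_bound HE) as [N HN]. exists (S (Nat.max N n1)).
  eapply r_box_id; [exact Hc | exact HP | apply HN; lia | eapply dh_mono_le; [exact H1 | lia]].
Qed.
Lemma der_boxdia c G0 G l phi psi D : has_id c = false -> Permutation G0 (DiaArr phi psi :: G ++ boxes l) -> Eder c phi l ->
  der c (conseqs l ++ [psi]) None -> der c G0 D.
Proof.
  intros Hc HP HE [n1 H1]. destruct (E_bound HE) as [N HN]. exists (S (Nat.max N n1)).
  eapply r_boxdia; [exact Hc | exact HP | apply HN; lia | eapply dh_mono_le; [exact H1 | lia]].
Qed.
Lemma der_boxdia_id c G0 G l phi psi D : has_id c = true -> Permutation G0 (DiaArr phi psi :: G ++ boxes l) -> Eder c phi l ->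
  der c (conseqs l ++ [phi; psi]) None -> der c G0 D.
Proof.
  intros Hc HP HE [n1 H1]. destruct (E_bound HE) as [N HN]. exists (S (Nat.max N n1)).
  eapply r_boxdia_id; [exact Hc | exact HP | apply HN; lia | eapply dh_mono_le; [exact H1 | lia]].
Qed.
Lemma der_dia c G0 G l phi psi eta theta : has_id c = false -> Permutation G0 (DiaArr phi psi :: G ++ boxes l) -> Eder c phi l ->
  der c [phi] (Some eta) -> der c [eta] (Some phi) ->
  der c (conseqs l ++ [psi]) (Some theta) -> der c G0 (Some (DiaArr eta theta)).
Proof.
  intros Hc HP HE [n2 H2] [n3 H3] [n1 H1]. destruct (E_bound HE) as [N HN].
  exists (S (Nat.max N (Nat.max n1 (Nat.max n2 n3)))).
  eapply r_dia; [exact Hc | exact HP | apply HN; lia | eapply dh_mono_le; [exact H2 | lia] | eapply dh_mono_le; [exact H3 | lia] | eapply dh_mono_le; [exact H1 | lia]].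
Qed.
Lemma der_dia_id c G0 G l phi psi eta theta : has_id c = true -> Permutation G0 (DiaArr phi psi :: G ++ boxes l) -> Eder c phi l ->
  der c [phi] (Some eta) -> der c [eta] (Some phi) ->
  der c (conseqs l ++ [phi; psi]) (Some theta) -> der c G0 (Some (DiaArr eta theta)).
Proof.
  intros Hc HP HE [n2 H2] [n3 H3] [n1 H1]. destruct (E_bound HE) as [N HN].
  exists (S (Nat.max N (Nat.max n1 (Nat.max n2 n3)))).
  eapply r_dia_id; [exact Hc | exact HP | apply HN; lia | eapply dh_mono_le; [exact H2 | lia] | eapply dh_mono_le; [exact H3 | lia] | eapply dh_mono_le; [exact H1 | lia]].
Qed.

Lemma elim_boxes c : has_mp c = true -> forall l Gm D,
  (forall p, In p l -> In (BoxArr (fst p) (snd p)) Gm /\ der c Gm (Some (fst p))) ->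
  der c (conseqs l ++ Gm) D -> der c Gm D.
Proof.
  intros Hc l; induction l as [|p l IHl]; intros Gm D Hl Hd; simpl in *; auto.
  apply IHl. { intros q Hq; apply Hl; auto. }
  destruct (Hl p (or_introl eq_refl)) as [Hin Hder].
  destruct (in_perm _ _ Hin) as [K HK].
  eapply der_mp_box with (G := conseqs l ++ K) (phi := fst p) (psi := snd p); [exact Hc | psolve | |].
  - eapply der_weak with (H := conseqs l); [exact Hder | psolve].
  - eapply der_perm; [exact Hd | psolve].
Qed.
Fixpoint fsize (A : form) : nat :=
  match A with
  | Var _ | Bot => 1
  | And a b | Or a b | Imp a b | BoxArr a b | DiaArr a b => 1 + fsize a + fsize b
  end.

Definition cut_for c A := forall G G' D, der c G (Some A) -> der c (A :: G') D -> der c (G ++ G') D.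

Lemma cut_use c B G Z G' D : cut_for c B -> der c G (Some B) -> der c Z D -> Permutation Z (B :: G') -> der c (G ++ G') D.
Proof. intros HB H1 H2 HP. apply HB; auto. eapply der_perm; eauto. Qed.

Arguments E_dh {c n phi l}.
Arguments dh_der {c n G D}.

Lemma in_of_perm {T} (l l' : list T) x : Permutation l l' -> In x l' -> In x l.
Proof. intros H Hx. eapply Permutation_in; [symmetry; exact H | exact Hx]. Qed.

Lemma in_box_ctx p l G H : In p l -> Permutation G (H ++ boxes l) -> In (BoxArr (fst p) (snd p)) G.
Proof.
  intros Hp HG. eapply in_of_perm; [exact HG|]. apply in_or_app; right.
  unfold boxes. apply in_map_iff. exists p; auto.
Qed.

Lemma Eder_trans c x y l : cut_for c y -> Eder c y l -> der c [x] (Some y) -> der c [y] (Some x) -> Eder c x l.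
Proof.
  intros Hcut HE H1 H2 p Hp. destruct (HE p Hp) as [E1 E2]. split.
  - assert (X : der c ([x] ++ []) (Some (fst p))) by (eapply cut_use; [exact Hcut | exact H1 | exact E1 | apply Permutation_refl]). exact X.
  - assert (X : der c ([fst p] ++ []) (Some x)) by (eapply cut_use; [exact Hcut | exact E2 | exact H2 | apply Permutation_refl]). exact X.
Qed.

Lemma Eder_app c x l1 l2 : Eder c x l1 -> Eder c x l2 -> Eder c x (l1 ++ l2).
Proof. intros H1 H2 p Hp. apply in_app_or in Hp as [Hp|Hp]; auto. Qed.

Lemma Eder_sub c x l q l'' : Eder c x l -> Permutation l (q :: l'') -> Eder c x l''.
Proof. intros H Hl p Hp. apply H. eapply in_of_perm; [exact Hl | right; exact Hp]. Qed.

Lemma Eder_hd c x l q l'' : Eder c x l -> Permutation l (q :: l'') -> der c [x] (Some (fst q)) /\ der c [fst q] (Some x).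
Proof. intros H Hl. apply H. eapply in_of_perm; [exact Hl | left; reflexivity]. Qed.

Definition PD c G A : Prop :=
  match A with
  | And a b => der c G (Some a) /\ der c G (Some b)
  | Or a b => der c G (Some a) \/ der c G (Some b)
  | Imp a b => der c (a :: G) (Some b)
  | BoxArr phi psi => exists H l, Permutation G (H ++ boxes l) /\ Eder c phi l /\
      ((has_id c = false /\ der c (conseqs l) (Some psi)) \/ (has_id c = true /\ der c (conseqs l ++ [phi]) (Some psi)))
  | DiaArr eta theta => (has_mp c = true /\ der c G (Some eta) /\ der c G (Some theta)) \/
      exists phi psi H l, Permutation G (DiaArr phi psi :: H ++ boxes l) /\ Eder c phi l /\
        der c [phi] (Some eta) /\ der c [eta] (Some phi) /\
        ((has_id c = false /\ der c (conseqs l ++ [psi]) (Some theta)) \/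
         (has_id c = true /\ der c (conseqs l ++ [phi; psi]) (Some theta)))
  | _ => False
  end.

Ltac cut_with IHs B G' H1 H2 := eapply (@cut_use _ B _ _ G' _ (IHs B ltac:(simpl; lia)) H1 H2); psolve.
Ltac ihr IH n G' H := apply (IH n ltac:(lia) _ _ G' H); psolve.
Arguments Eder_hd {c x l q l''}.
Lemma cut_right c A (IHs : forall B, fsize B < fsize A -> cut_for c B) G (HPD : PD c G A) :
  forall m Z D G', dh c m Z D -> Permutation Z (A :: G') -> der c (G ++ G') D.
Proof.
  induction m as [m IH] using (well_founded_induction lt_wf).
  intros Z D G' Hd HP. revert IH HP.
  destruct Hd as
  [ n G0 K p Hp
  | n G0 K D0 Hp
  | n G0 K a b D0 Hp H1
  | n K a b H1 H2
  | n G0 K a b D0 Hp H1 H2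
  | n K a b H1
  | n K a b H1
  | n K a b H1
  | n G0 K a b D0 Hp H1 H2
  | n G0 K l f s Hc Hp HE H1
  | n G0 K l f s e t Hc Hp HE He1 He2 H1
  | n G0 K l f s D0 Hc Hp HE H1
  | n G0 K l f s Hc Hp HE H1
  | n G0 K l f s e t Hc Hp HE He1 He2 H1
  | n G0 K l f s D0 Hc Hp HE H1
  | n G0 K f s D0 Hc Hp H1 H2
  | n K f s Hc H1 H2 ]; intros IH HP.
  -
    assert (HI : In (Var p) (A :: G')).
    { eapply Permutation_in; [exact HP|]. eapply in_of_perm; [exact Hp | left; reflexivity]. }
    destruct HI as [HA|HI]; [subst A; simpl in HPD; contradiction|].
    apply der_init. apply in_or_app; right; exact HI.
  -
    assert (HI : In Bot (A :: G')).
    { eapply Permutation_in; [exact HP|]. eapply in_of_perm; [exact Hp | left; reflexivity]. }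
    destruct HI as [HA|HI]; [subst A; simpl in HPD; contradiction|].
    apply der_bot. apply in_or_app; right; exact HI.
  -
    assert (HH : Permutation (A :: G') (And a b :: K)) by (rewrite <- HP; exact Hp).
    apply perm_cons_cons in HH. destruct HH as [[Heq HK]|(M & HM1 & HM2)].
    + subst A. simpl in HPD. destruct HPD as [Ha Hb].
      assert (X1 : der c (G ++ b :: K) D0) by cut_with IHs a (b :: K) Ha (dh_der H1).
      assert (X2 : der c (G ++ (G ++ K)) D0) by cut_with IHs b (G ++ K) Hb X1.
      apply der_contr_app in X2. eapply der_perm; [exact X2 | psolve].
    + assert (X1 : der c (G ++ a :: b :: M) D0) by ihr IH n (a :: b :: M) H1.
      eapply der_andL with (G := G ++ M) (a := a) (b := b); [psolve | eapply der_perm; [exact X1 | psolve]].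
  - apply der_andR; [ihr IH n G' H1 | ihr IH n G' H2].
  -
    assert (HH : Permutation (A :: G') (Or a b :: K)) by (rewrite <- HP; exact Hp).
    apply perm_cons_cons in HH. destruct HH as [[Heq HK]|(M & HM1 & HM2)].
    + subst A. simpl in HPD. destruct HPD as [Ha|Ha].
      * assert (X1 : der c (G ++ K) D0) by cut_with IHs a K Ha (dh_der H1).
        eapply der_perm; [exact X1 | psolve].
      * assert (X1 : der c (G ++ K) D0) by cut_with IHs b K Ha (dh_der H2).
        eapply der_perm; [exact X1 | psolve].
    + assert (X1 : der c (G ++ a :: M) D0) by ihr IH n (a :: M) H1.
      assert (X2 : der c (G ++ b :: M) D0) by ihr IH n (b :: M) H2.
      eapply der_orL with (G := G ++ M) (a := a) (b := b); [psolve | eapply der_perm; [exact X1 | psolve] | eapply der_perm; [exact X2 | psolve]].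
  - apply der_orR1; ihr IH n G' H1.
  - apply der_orR2; ihr IH n G' H1.
  - apply der_impR. assert (X1 : der c (G ++ a :: G') (Some b)) by ihr IH n (a :: G') H1.
    eapply der_perm; [exact X1 | psolve].
  -
    assert (HH : Permutation (A :: G') (Imp a b :: K)) by (rewrite <- HP; exact Hp).
    apply perm_cons_cons in HH. destruct HH as [[Heq HK]|(M & HM1 & HM2)].
    + subst A. simpl in HPD.
      assert (X1 : der c (G ++ K) (Some a)) by ihr IH n K H1.
      assert (X2 : der c ((G ++ K) ++ G) (Some b)) by cut_with IHs a G X1 HPD.
      assert (X3 : der c (((G ++ K) ++ G) ++ K) D0) by cut_with IHs b K X2 (dh_der H2).
      assert (X4 : der c ((G ++ K) ++ (G ++ K) ++ []) D0) by (eapply der_perm; [exact X3 | psolve]).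
      apply der_contr_app in X4. eapply der_perm; [exact X4 | psolve].
    + assert (X1 : der c (G ++ Imp a b :: M) (Some a)) by ihr IH n (Imp a b :: M) H1.
      assert (X2 : der c (G ++ b :: M) D0) by ihr IH n (b :: M) H2.
      eapply der_impL with (G := G ++ M) (a := a) (b := b); [psolve | eapply der_perm; [exact X1 | psolve] | eapply der_perm; [exact X2 | psolve]].
  -
    assert (HH : Permutation (A :: G') (K ++ boxes l)) by (rewrite <- HP; exact Hp).
    apply perm_cons_app in HH. destruct HH as [(M & HM1 & HM2)|(M & HM1 & HM2)].
    + eapply der_box with (G := G ++ M) (l := l); [exact Hc | psolve | exact (E_dh HE) | exact (dh_der H1)].
    + apply boxes_perm in HM1. destruct HM1 as (q & l'' & HAq & Hl & HM).
      subst A. simpl in HPD. destruct HPD as (H0 & l0 & HG & HE0 & [[Hc0 Hc0']|[Hc0 Hc0']]); [|congruence].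
      destruct (Eder_hd (E_dh HE) Hl) as [F1 F2].
      eapply der_box with (G := H0 ++ K) (l := l0 ++ l'').
      * exact Hc.
      * psolve.
      * apply Eder_app; [(eapply Eder_trans; [ | exact HE0 | exact F1 | exact F2]; apply IHs; simpl; lia) | eapply Eder_sub; [exact (E_dh HE) | exact Hl]].
      * pose proof (conseqs_perm _ _ Hl).
        assert (X1 : der c (conseqs l0 ++ conseqs l'') (Some s)) by cut_with IHs (snd q) (conseqs l'') Hc0' (dh_der H1).
        eapply der_perm; [exact X1 | psolve].
  -
    assert (HH : Permutation (A :: G') (DiaArr f s :: (K ++ boxes l))) by (rewrite <- HP; exact Hp).
    apply perm_cons_cons in HH. destruct HH as [[Heq HK]|(M & HM1 & HM2)].
    + subst A. simpl in HPD.
      destruct HPD as [(Hm & Hf & Hs) | (ph & ps & H0 & l0 & HG & HE0 & Hpf & Hfp & [[Hc0 Hc0']|[Hc0 Hc0']])].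
      * apply der_mp_dia; [exact Hm | |].
        -- assert (X : der c (G ++ []) (Some e)) by cut_with IHs f (@nil form) Hf (dh_der He1).
           eapply der_weak with (H := G'); [exact X | psolve].
        -- assert (X1 : der c (G ++ conseqs l) (Some t)) by cut_with IHs s (conseqs l) Hs (dh_der H1).
           apply elim_boxes with (l := l); [exact Hm | |].
           ++ intros p Hp'. split.
              ** apply in_or_app; right. eapply in_box_ctx; [exact Hp' | exact HK].
              ** assert (X : der c (G ++ []) (Some (fst p))) by cut_with IHs f (@nil form) Hf (dh_der (proj1 (HE p Hp'))).
                 eapply der_weak with (H := G'); [exact X | psolve].
           ++ eapply der_weak with (H := G'); [exact X1 | psolve].
      * eapply der_dia with (G := H0 ++ K) (l := l0 ++ l) (phi := ph) (psi := ps).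
        -- exact Hc.
        -- psolve.
        -- apply Eder_app; [exact HE0 | (eapply Eder_trans; [ | exact (E_dh HE) | exact Hpf | exact Hfp]; apply IHs; simpl; lia)].
        -- assert (X : der c ([ph] ++ []) (Some e)) by cut_with IHs f (@nil form) Hpf (dh_der He1). exact X.
        -- assert (X : der c ([e] ++ []) (Some ph)) by cut_with IHs f (@nil form) (dh_der He2) Hfp. exact X.
        -- assert (X1 : der c ((conseqs l0 ++ [ps]) ++ conseqs l) (Some t)) by cut_with IHs s (conseqs l) Hc0' (dh_der H1).
           eapply der_perm; [exact X1 | psolve].
      * congruence.
    + symmetry in HM2. apply perm_cons_app in HM2. destruct HM2 as [(M' & HM3 & HM4)|(M' & HM3 & HM4)].
      * eapply der_dia with (G := G ++ M') (l := l) (phi := f) (psi := s);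
          [exact Hc | psolve | exact (E_dh HE) | exact (dh_der He1) | exact (dh_der He2) | exact (dh_der H1)].
      * apply boxes_perm in HM3. destruct HM3 as (q & l'' & HAq & Hl & HM).
        subst A. simpl in HPD. destruct HPD as (H0 & l0 & HG & HE0 & [[Hc0 Hc0']|[Hc0 Hc0']]); [|congruence].
        destruct (Eder_hd (E_dh HE) Hl) as [F1 F2].
        eapply der_dia with (G := H0 ++ K) (l := l0 ++ l'') (phi := f) (psi := s).
        -- exact Hc.
        -- psolve.
        -- apply Eder_app; [(eapply Eder_trans; [ | exact HE0 | exact F1 | exact F2]; apply IHs; simpl; lia) | eapply Eder_sub; [exact (E_dh HE) | exact Hl]].
        -- exact (dh_der He1).
        -- exact (dh_der He2).
        -- pose proof (conseqs_perm _ _ Hl).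
           assert (X1 : der c (conseqs l0 ++ conseqs l'' ++ [s]) (Some t)) by cut_with IHs (snd q) (conseqs l'' ++ [s]) Hc0' (dh_der H1).
           eapply der_perm; [exact X1 | psolve].
  -
    assert (HH : Permutation (A :: G') (DiaArr f s :: (K ++ boxes l))) by (rewrite <- HP; exact Hp).
    apply perm_cons_cons in HH. destruct HH as [[Heq HK]|(M & HM1 & HM2)].
    + subst A. simpl in HPD.
      destruct HPD as [(Hm & Hf & Hs) | (ph & ps & H0 & l0 & HG & HE0 & Hpf & Hfp & [[Hc0 Hc0']|[Hc0 Hc0']])].
      * apply der_wR.
        assert (X1 : der c (G ++ conseqs l) None) by cut_with IHs s (conseqs l) Hs (dh_der H1).
        apply elim_boxes with (l := l); [exact Hm | |].
        -- intros p Hp'. split.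
           ++ apply in_or_app; right. eapply in_box_ctx; [exact Hp' | exact HK].
           ++ assert (X : der c (G ++ []) (Some (fst p))) by cut_with IHs f (@nil form) Hf (dh_der (proj1 (HE p Hp'))).
              eapply der_weak with (H := G'); [exact X | psolve].
        -- eapply der_weak with (H := G'); [exact X1 | psolve].
      * eapply der_boxdia with (G := H0 ++ K) (l := l0 ++ l) (phi := ph) (psi := ps).
        -- exact Hc.
        -- psolve.
        -- apply Eder_app; [exact HE0 | (eapply Eder_trans; [ | exact (E_dh HE) | exact Hpf | exact Hfp]; apply IHs; simpl; lia)].
        -- assert (X1 : der c ((conseqs l0 ++ [ps]) ++ conseqs l) None) by cut_with IHs s (conseqs l) Hc0' (dh_der H1).
           eapply der_perm; [exact X1 | psolve].
      * congruence.
    + symmetry in HM2. apply perm_cons_app in HM2. destruct HM2 as [(M' & HM3 & HM4)|(M' & HM3 & HM4)].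
      * eapply der_boxdia with (G := G ++ M') (l := l) (phi := f) (psi := s);
          [exact Hc | psolve | exact (E_dh HE) | exact (dh_der H1)].
      * apply boxes_perm in HM3. destruct HM3 as (q & l'' & HAq & Hl & HM).
        subst A. simpl in HPD. destruct HPD as (H0 & l0 & HG & HE0 & [[Hc0 Hc0']|[Hc0 Hc0']]); [|congruence].
        destruct (Eder_hd (E_dh HE) Hl) as [F1 F2].
        eapply der_boxdia with (G := H0 ++ K) (l := l0 ++ l'') (phi := f) (psi := s).
        -- exact Hc.
        -- psolve.
        -- apply Eder_app; [(eapply Eder_trans; [ | exact HE0 | exact F1 | exact F2]; apply IHs; simpl; lia) | eapply Eder_sub; [exact (E_dh HE) | exact Hl]].
        -- pose proof (conseqs_perm _ _ Hl).
           assert (X1 : der c (conseqs l0 ++ conseqs l'' ++ [s]) None) by cut_with IHs (snd q) (conseqs l'' ++ [s]) Hc0' (dh_der H1).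
           eapply der_perm; [exact X1 | psolve].
  -
    assert (HH : Permutation (A :: G') (K ++ boxes l)) by (rewrite <- HP; exact Hp).
    apply perm_cons_app in HH. destruct HH as [(M & HM1 & HM2)|(M & HM1 & HM2)].
    + eapply der_box_id with (G := G ++ M) (l := l); [exact Hc | psolve | exact (E_dh HE) | exact (dh_der H1)].
    + apply boxes_perm in HM1. destruct HM1 as (q & l'' & HAq & Hl & HM).
      subst A. simpl in HPD. destruct HPD as (H0 & l0 & HG & HE0 & [[Hc0 Hc0']|[Hc0 Hc0']]); [congruence|].
      destruct (Eder_hd (E_dh HE) Hl) as [F1 F2].
      eapply der_box_id with (G := H0 ++ K) (l := l0 ++ l'').
      * exact Hc.
      * psolve.
      * apply Eder_app; [(eapply Eder_trans; [ | exact HE0 | exact F1 | exact F2]; apply IHs; simpl; lia) | eapply Eder_sub; [exact (E_dh HE) | exact Hl]].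
      * pose proof (conseqs_perm _ _ Hl).
        assert (X1 : der c ((conseqs l0 ++ [fst q]) ++ conseqs l'' ++ [f]) (Some s)) by cut_with IHs (snd q) (conseqs l'' ++ [f]) Hc0' (dh_der H1).
        assert (X2 : der c ([f] ++ conseqs l0 ++ conseqs l'' ++ [f]) (Some s)) by cut_with IHs (fst q) (conseqs l0 ++ conseqs l'' ++ [f]) F1 X1.
        assert (X3 : der c (f :: f :: conseqs l0 ++ conseqs l'') (Some s)) by (eapply der_perm; [exact X2 | psolve]).
        apply der_contr in X3. eapply der_perm; [exact X3 | psolve].
  -
    assert (HH : Permutation (A :: G') (DiaArr f s :: (K ++ boxes l))) by (rewrite <- HP; exact Hp).
    apply perm_cons_cons in HH. destruct HH as [[Heq HK]|(M & HM1 & HM2)].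
    + subst A. simpl in HPD.
      destruct HPD as [(Hm & Hf & Hs) | (ph & ps & H0 & l0 & HG & HE0 & Hpf & Hfp & [[Hc0 Hc0']|[Hc0 Hc0']])].
      * apply der_mp_dia; [exact Hm | |].
        -- assert (X : der c (G ++ []) (Some e)) by cut_with IHs f (@nil form) Hf (dh_der He1).
           eapply der_weak with (H := G'); [exact X | psolve].
        -- assert (X1 : der c (G ++ conseqs l ++ [f]) (Some t)) by cut_with IHs s (conseqs l ++ [f]) Hs (dh_der H1).
           assert (X2 : der c (G ++ G ++ conseqs l) (Some t)) by cut_with IHs f (G ++ conseqs l) Hf X1.
           apply der_contr_app in X2.
           apply elim_boxes with (l := l); [exact Hm | |].
           ++ intros p Hp'. split.
              ** apply in_or_app; right. eapply in_box_ctx; [exact Hp' | exact HK].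
              ** assert (X : der c (G ++ []) (Some (fst p))) by cut_with IHs f (@nil form) Hf (dh_der (proj1 (HE p Hp'))).
                 eapply der_weak with (H := G'); [exact X | psolve].
           ++ eapply der_weak with (H := G'); [exact X2 | psolve].
      * congruence.
      * eapply der_dia_id with (G := H0 ++ K) (l := l0 ++ l) (phi := ph) (psi := ps).
        -- exact Hc.
        -- psolve.
        -- apply Eder_app; [exact HE0 | (eapply Eder_trans; [ | exact (E_dh HE) | exact Hpf | exact Hfp]; apply IHs; simpl; lia)].
        -- assert (X : der c ([ph] ++ []) (Some e)) by cut_with IHs f (@nil form) Hpf (dh_der He1). exact X.
        -- assert (X : der c ([e] ++ []) (Some ph)) by cut_with IHs f (@nil form) (dh_der He2) Hfp. exact X.
        -- assert (X1 : der c ((conseqs l0 ++ [ph; ps]) ++ conseqs l ++ [f]) (Some t)) by cut_with IHs s (conseqs l ++ [f]) Hc0' (dh_der H1).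
           assert (X2 : der c ([ph] ++ conseqs l0 ++ [ph; ps] ++ conseqs l) (Some t)) by cut_with IHs f (conseqs l0 ++ [ph; ps] ++ conseqs l) Hpf X1.
           assert (X3 : der c (ph :: ph :: conseqs l0 ++ conseqs l ++ [ps]) (Some t)) by (eapply der_perm; [exact X2 | psolve]).
           apply der_contr in X3. eapply der_perm; [exact X3 | psolve].
    + symmetry in HM2. apply perm_cons_app in HM2. destruct HM2 as [(M' & HM3 & HM4)|(M' & HM3 & HM4)].
      * eapply der_dia_id with (G := G ++ M') (l := l) (phi := f) (psi := s);
          [exact Hc | psolve | exact (E_dh HE) | exact (dh_der He1) | exact (dh_der He2) | exact (dh_der H1)].
      * apply boxes_perm in HM3. destruct HM3 as (q & l'' & HAq & Hl & HM).
        subst A. simpl in HPD. destruct HPD as (H0 & l0 & HG & HE0 & [[Hc0 Hc0']|[Hc0 Hc0']]); [congruence|].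
        destruct (Eder_hd (E_dh HE) Hl) as [F1 F2].
        eapply der_dia_id with (G := H0 ++ K) (l := l0 ++ l'') (phi := f) (psi := s).
        -- exact Hc.
        -- psolve.
        -- apply Eder_app; [(eapply Eder_trans; [ | exact HE0 | exact F1 | exact F2]; apply IHs; simpl; lia) | eapply Eder_sub; [exact (E_dh HE) | exact Hl]].
        -- exact (dh_der He1).
        -- exact (dh_der He2).
        -- pose proof (conseqs_perm _ _ Hl).
           assert (X1 : der c ((conseqs l0 ++ [fst q]) ++ conseqs l'' ++ [f; s]) (Some t)) by cut_with IHs (snd q) (conseqs l'' ++ [f; s]) Hc0' (dh_der H1).
           assert (X2 : der c ([f] ++ conseqs l0 ++ conseqs l'' ++ [f; s]) (Some t)) by cut_with IHs (fst q) (conseqs l0 ++ conseqs l'' ++ [f; s]) F1 X1.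
           assert (X3 : der c (f :: f :: conseqs l0 ++ conseqs l'' ++ [s]) (Some t)) by (eapply der_perm; [exact X2 | psolve]).
           apply der_contr in X3. eapply der_perm; [exact X3 | psolve].
  -
    assert (HH : Permutation (A :: G') (DiaArr f s :: (K ++ boxes l))) by (rewrite <- HP; exact Hp).
    apply perm_cons_cons in HH. destruct HH as [[Heq HK]|(M & HM1 & HM2)].
    + subst A. simpl in HPD.
      destruct HPD as [(Hm & Hf & Hs) | (ph & ps & H0 & l0 & HG & HE0 & Hpf & Hfp & [[Hc0 Hc0']|[Hc0 Hc0']])].
      * apply der_wR.
        assert (X1 : der c (G ++ conseqs l ++ [f]) None) by cut_with IHs s (conseqs l ++ [f]) Hs (dh_der H1).
        assert (X2 : der c (G ++ G ++ conseqs l) None) by cut_with IHs f (G ++ conseqs l) Hf X1.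
        apply der_contr_app in X2.
        apply elim_boxes with (l := l); [exact Hm | |].
        -- intros p Hp'. split.
           ++ apply in_or_app; right. eapply in_box_ctx; [exact Hp' | exact HK].
           ++ assert (X : der c (G ++ []) (Some (fst p))) by cut_with IHs f (@nil form) Hf (dh_der (proj1 (HE p Hp'))).
              eapply der_weak with (H := G'); [exact X | psolve].
        -- eapply der_weak with (H := G'); [exact X2 | psolve].
      * congruence.
      * eapply der_boxdia_id with (G := H0 ++ K) (l := l0 ++ l) (phi := ph) (psi := ps).
        -- exact Hc.
        -- psolve.
        -- apply Eder_app; [exact HE0 | (eapply Eder_trans; [ | exact (E_dh HE) | exact Hpf | exact Hfp]; apply IHs; simpl; lia)].
        -- assert (X1 : der c ((conseqs l0 ++ [ph; ps]) ++ conseqs l ++ [f]) None) by cut_with IHs s (conseqs l ++ [f]) Hc0' (dh_der H1).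
           assert (X2 : der c ([ph] ++ conseqs l0 ++ [ph; ps] ++ conseqs l) None) by cut_with IHs f (conseqs l0 ++ [ph; ps] ++ conseqs l) Hpf X1.
           assert (X3 : der c (ph :: ph :: conseqs l0 ++ conseqs l ++ [ps]) None) by (eapply der_perm; [exact X2 | psolve]).
           apply der_contr in X3. eapply der_perm; [exact X3 | psolve].
    + symmetry in HM2. apply perm_cons_app in HM2. destruct HM2 as [(M' & HM3 & HM4)|(M' & HM3 & HM4)].
      * eapply der_boxdia_id with (G := G ++ M') (l := l) (phi := f) (psi := s);
          [exact Hc | psolve | exact (E_dh HE) | exact (dh_der H1)].
      * apply boxes_perm in HM3. destruct HM3 as (q & l'' & HAq & Hl & HM).
        subst A. simpl in HPD. destruct HPD as (H0 & l0 & HG & HE0 & [[Hc0 Hc0']|[Hc0 Hc0']]); [congruence|].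
        destruct (Eder_hd (E_dh HE) Hl) as [F1 F2].
        eapply der_boxdia_id with (G := H0 ++ K) (l := l0 ++ l'') (phi := f) (psi := s).
        -- exact Hc.
        -- psolve.
        -- apply Eder_app; [(eapply Eder_trans; [ | exact HE0 | exact F1 | exact F2]; apply IHs; simpl; lia) | eapply Eder_sub; [exact (E_dh HE) | exact Hl]].
        -- pose proof (conseqs_perm _ _ Hl).
           assert (X1 : der c ((conseqs l0 ++ [fst q]) ++ conseqs l'' ++ [f; s]) None) by cut_with IHs (snd q) (conseqs l'' ++ [f; s]) Hc0' (dh_der H1).
           assert (X2 : der c ([f] ++ conseqs l0 ++ conseqs l'' ++ [f; s]) None) by cut_with IHs (fst q) (conseqs l0 ++ conseqs l'' ++ [f; s]) F1 X1.
           assert (X3 : der c (f :: f :: conseqs l0 ++ conseqs l'' ++ [s]) None) by (eapply der_perm; [exact X2 | psolve]).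
           apply der_contr in X3. eapply der_perm; [exact X3 | psolve].
  -
    assert (HH : Permutation (A :: G') (BoxArr f s :: K)) by (rewrite <- HP; exact Hp).
    apply perm_cons_cons in HH. destruct HH as [[Heq HK]|(M & HM1 & HM2)].
    + subst A.
      assert (X1 : der c (G ++ K) (Some f)) by ihr IH n K H1.
      assert (X2 : der c (G ++ s :: K) D0) by ihr IH n (s :: K) H2.
      simpl in HPD. destruct HPD as (H0 & l0 & HG & HE0 & [[Hc0 Hc0']|[Hc0 Hc0']]).
      * assert (X3 : der c (conseqs l0 ++ G ++ K) D0) by cut_with IHs s (G ++ K) Hc0' X2.
        assert (X4 : der c (G ++ K) D0).
        { apply elim_boxes with (l := l0); [exact Hc | | exact X3].
          intros p Hp'. split.
          - apply in_or_app; left. eapply in_box_ctx; [exact Hp' | exact HG].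
          - assert (X : der c ((G ++ K) ++ []) (Some (fst p))) by cut_with IHs f (@nil form) X1 (proj1 (HE0 p Hp')).
            rewrite app_nil_r in X. exact X. }
        eapply der_perm; [exact X4 | psolve].
      * assert (X3 : der c ((conseqs l0 ++ [f]) ++ G ++ K) D0) by cut_with IHs s (G ++ K) Hc0' X2.
        assert (X4 : der c ((G ++ K) ++ conseqs l0 ++ G ++ K) D0) by cut_with IHs f (conseqs l0 ++ G ++ K) X1 X3.
        assert (X5 : der c ((G ++ K) ++ (G ++ K) ++ conseqs l0) D0) by (eapply der_perm; [exact X4 | psolve]).
        apply der_contr_app in X5.
        assert (X6 : der c (G ++ K) D0).
        { apply elim_boxes with (l := l0); [exact Hc | | eapply der_perm; [exact X5 | psolve]].
          intros p Hp'. split.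
          - apply in_or_app; left. eapply in_box_ctx; [exact Hp' | exact HG].
          - assert (X : der c ((G ++ K) ++ []) (Some (fst p))) by cut_with IHs f (@nil form) X1 (proj1 (HE0 p Hp')).
            rewrite app_nil_r in X. exact X. }
        eapply der_perm; [exact X6 | psolve].
    + assert (X1 : der c (G ++ BoxArr f s :: M) (Some f)) by ihr IH n (BoxArr f s :: M) H1.
      assert (X2 : der c (G ++ s :: BoxArr f s :: M) D0) by ihr IH n (s :: BoxArr f s :: M) H2.
      eapply der_mp_box with (G := G ++ M) (phi := f) (psi := s);
        [exact Hc | psolve | eapply der_perm; [exact X1 | psolve] | eapply der_perm; [exact X2 | psolve]].
  - apply der_mp_dia; [exact Hc | ihr IH n G' H1 | ihr IH n G' H2].
Qed.
Lemma cut_left c A (IHs : forall B, fsize B < fsize A -> cut_for c B) :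
  forall m G D0, dh c m G D0 -> D0 = Some A -> forall G' D, der c (A :: G') D -> der c (G ++ G') D.
Proof.
  induction m as [m IH] using (well_founded_induction lt_wf).
  intros G1 D1 Hd. revert IH.
  destruct Hd as
  [ n G0 K p Hp
  | n G0 K D0 Hp
  | n G0 K a b D0 Hp H1
  | n K a b H1 H2
  | n G0 K a b D0 Hp H1 H2
  | n K a b H1
  | n K a b H1
  | n K a b H1
  | n G0 K a b D0 Hp H1 H2
  | n G0 K l f s Hc Hp HE H1
  | n G0 K l f s e t Hc Hp HE He1 He2 H1
  | n G0 K l f s D0 Hc Hp HE H1
  | n G0 K l f s Hc Hp HE H1
  | n G0 K l f s e t Hc Hp HE He1 He2 H1
  | n G0 K l f s D0 Hc Hp HE H1
  | n G0 K f s D0 Hc Hp H1 H2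
  | n K f s Hc H1 H2 ]; intros IH HD0 G' D HR.
  - injection HD0 as HA. subst A. eapply der_weak with (H := K); [exact HR | psolve].
  - apply der_bot. apply in_or_app; left. eapply in_of_perm; [exact Hp | left; reflexivity].
  - pose proof (IH n ltac:(lia) _ _ H1 HD0 G' D HR) as X1.
    eapply der_andL with (G := K ++ G') (a := a) (b := b); [psolve | eapply der_perm; [exact X1 | psolve]].
  - injection HD0 as HA. subst A. destruct HR as [m2 HR].
    refine (cut_right _ _ IHs K _ m2 _ _ G' HR (Permutation_refl _)).
    simpl. split; eapply dh_der; eassumption.
  - pose proof (IH n ltac:(lia) _ _ H1 HD0 G' D HR) as X1.
    pose proof (IH n ltac:(lia) _ _ H2 HD0 G' D HR) as X2.
    eapply der_orL with (G := K ++ G') (a := a) (b := b); [psolve | eapply der_perm; [exact X1 | psolve] | eapply der_perm; [exact X2 | psolve]].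
  - injection HD0 as HA. subst A. destruct HR as [m2 HR].
    refine (cut_right _ _ IHs K _ m2 _ _ G' HR (Permutation_refl _)).
    simpl. left; eapply dh_der; eassumption.
  - injection HD0 as HA. subst A. destruct HR as [m2 HR].
    refine (cut_right _ _ IHs K _ m2 _ _ G' HR (Permutation_refl _)).
    simpl. right; eapply dh_der; eassumption.
  - injection HD0 as HA. subst A. destruct HR as [m2 HR].
    refine (cut_right _ _ IHs K _ m2 _ _ G' HR (Permutation_refl _)).
    simpl. eapply dh_der; eassumption.
  - pose proof (IH n ltac:(lia) _ _ H2 HD0 G' D HR) as X2.
    eapply der_impL with (G := K ++ G') (a := a) (b := b); [psolve | eapply der_weak with (H := G'); [exact (dh_der H1) | psolve] | eapply der_perm; [exact X2 | psolve]].
  - injection HD0 as HA. subst A. destruct HR as [m2 HR].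
    refine (cut_right _ _ IHs G0 _ m2 _ _ G' HR (Permutation_refl _)).
    simpl. exists K, l. split; [exact Hp|]. split; [exact (E_dh HE)|]. left; split; [exact Hc | exact (dh_der H1)].
  - injection HD0 as HA. subst A. destruct HR as [m2 HR].
    refine (cut_right _ _ IHs G0 _ m2 _ _ G' HR (Permutation_refl _)).
    simpl. right. exists f, s, K, l. split; [exact Hp|]. split; [exact (E_dh HE)|].
    split; [exact (dh_der He1)|]. split; [exact (dh_der He2)|]. left; split; [exact Hc | exact (dh_der H1)].
  - eapply der_boxdia with (G := K ++ G') (l := l) (phi := f) (psi := s); [exact Hc | psolve | exact (E_dh HE) | exact (dh_der H1)].
  - injection HD0 as HA. subst A. destruct HR as [m2 HR].
    refine (cut_right _ _ IHs G0 _ m2 _ _ G' HR (Permutation_refl _)).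
    simpl. exists K, l. split; [exact Hp|]. split; [exact (E_dh HE)|]. right; split; [exact Hc | exact (dh_der H1)].
  - injection HD0 as HA. subst A. destruct HR as [m2 HR].
    refine (cut_right _ _ IHs G0 _ m2 _ _ G' HR (Permutation_refl _)).
    simpl. right. exists f, s, K, l. split; [exact Hp|]. split; [exact (E_dh HE)|].
    split; [exact (dh_der He1)|]. split; [exact (dh_der He2)|]. right; split; [exact Hc | exact (dh_der H1)].
  - eapply der_boxdia_id with (G := K ++ G') (l := l) (phi := f) (psi := s); [exact Hc | psolve | exact (E_dh HE) | exact (dh_der H1)].
  - pose proof (IH n ltac:(lia) _ _ H2 HD0 G' D HR) as X2.
    eapply der_mp_box with (G := K ++ G') (phi := f) (psi := s);
      [exact Hc | psolve | eapply der_weak with (H := G'); [exact (dh_der H1) | psolve] | eapply der_perm; [exact X2 | psolve]].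
  - injection HD0 as HA. subst A. destruct HR as [m2 HR].
    refine (cut_right _ _ IHs K _ m2 _ _ G' HR (Permutation_refl _)).
    simpl. left. split; [exact Hc|]. split; eapply dh_der; eassumption.
Qed.

Lemma cut_all c : forall s A, fsize A <= s -> cut_for c A.
Proof.
  induction s as [|s IHs]; intros A HA.
  - destruct A; simpl in HA; lia.
  - intros G G' D [m HL] HR. eapply (cut_left c A); [ | exact HL | reflexivity | exact HR].
    intros B HB. apply IHs. lia.
Qed.

Theorem theorem10 : forall c : calculus,
  (* w_L height-preserving admissible *)
  (forall n G D phi, dh c n G D -> dh c n (phi :: G) D) /\
  (* w_R height-preserving admissible *)
  (forall n G phi, dh c n G None -> dh c n G (Some phi)) /\
  (* contraction height-preserving admissible *)
  (forall n G D phi, dh c n (phi :: phi :: G) D -> dh c n (phi :: G) D) /\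
  (* cut admissible *)
  (forall G G' D phi, der c G (Some phi) -> der c (phi :: G') D -> der c (G ++ G') D).
Proof.
  intro c. split; [|split; [|split]].
  - intros n G D phi H. apply dh_weak; exact H.
  - intros n G phi H. apply dh_wR; exact H.
  - intros n G D phi H. apply contr; exact H.
  - intros G G' D phi H1 H2. exact (cut_all c (fsize phi) phi (le_n _) G G' D H1 H2).
Qed.
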